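(* Let $0<c<1$, let $n,d$ be such that $\delta=(3c)^{1/3}\left(\frac{\log d}{\log \frac{n}{d^2}}\right)^{1/4}$ satisfies $\delta<1/16$, and let $G$ be a $d$-regular graph on $n$ nodes. If $K$ is a pseudo-clique of $G$, then \[|K| \leq \frac{1 - 8\delta}{1- 13\delta} (d+1).\]
   Context: A dense spot of $G$ is a subgraph $H\subseteq G$ with $|H|\le d+1$ nodes such that every node $x\in H$ has $\deg_H(x)\ge(1-4\delta)d$. A pseudo-clique is a subgraph $K=\bigcup_{H\in\mathcal{H}}H$ where $\mathcal{H}$ is a maximal family of pairwise intersecting (sharing at least one node) dense spots. $|K|$ is the number of nodes of $K$. *)

(* Defs.v *)
From mathcomp Require Import all_boot all_order all_algebra.
From mathcomp Require Import reals exp.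
Set Implicit Arguments. Unset Strict Implicit. Unset Printing Implicit Defensive.
Import Order.TTheory GRing.Theory Num.Theory.
Local Open Scope ring_scope.

Definition simple_graph (T : finType) (e : rel T) : Prop :=
  symmetric e /\ irreflexive e.

Definition regular (T : finType) (e : rel T) (d : nat) : Prop :=
  forall x : T, #|[set y | e x y]| = d.

Definition degIn (T : finType) (e : rel T) (H : {set T}) (x : T) : nat :=
  #|[set y in H | e x y]|.

Definition delta (R : realType) (c : R) (n d : nat) : R :=
  powR (3 * c) (3%:R^-1) *
  powR (ln (d%:R) / ln (n%:R / (d%:R ^+ 2))) (4%:R^-1).

(* Dense spot (identified with its node set; H is the induced subgraph). *)
Definition dense_spot (R : realType) (T : finType) (e : rel T) (d : nat)
    (del : R) (H : {set T}) : Prop :=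
  (#|H| <= d.+1)%N /\
  forall x, x \in H -> (1 - 4 * del) * d%:R <= (degIn e H x)%:R.

Definition intersecting_dense_family (R : realType) (T : finType) (e : rel T)
    (d : nat) (del : R) (F : {set {set T}}) : Prop :=
  (forall H, H \in F -> dense_spot e d del H) /\
  (forall H1 H2, H1 \in F -> H2 \in F -> H1 :&: H2 != set0).

Definition maximal_intersecting_dense_family (R : realType) (T : finType)
    (e : rel T) (d : nat) (del : R) (F : {set {set T}}) : Prop :=
  intersecting_dense_family e d del F /\
  forall F' : {set {set T}}, F \subset F' ->
    intersecting_dense_family e d del F' -> F' = F.

Definition pseudo_clique (R : realType) (T : finType) (e : rel T) (d : nat)
    (del : R) (K : {set T}) : Prop :=
  exists F : {set {set T}},
    maximal_intersecting_dense_family e d del F /\ K = cover F.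

(* Main.v *)
Require Import Defs.
From mathcomp Require Import all_boot all_order all_algebra.
From mathcomp Require Import reals exp.
From mathcomp Require Import ring lra.
Import Order.TTheory GRing.Theory Num.Theory.
Local Open Scope ring_scope.

Lemma card_sel (T : finType) (S : {set T}) (P : pred T) :
  #|[set z in S | P z]| = (\sum_(z in S) (P z : nat))%N.
Proof.
rewrite -sum1_card (eq_bigl (fun z => (z \in S) && P z)); last by move=> z; rewrite inE.
by rewrite big_mkcondr.
Qed.

Lemma dcount (T : finType) (e : rel T) (A B : {set T}) : symmetric e ->
  (\sum_(y in A) #|[set z in B | e y z]| = \sum_(z in B) #|[set y in A | e z y]|)%N.
Proof.
move=> se.
rewrite (eq_bigr (fun y => \sum_(z in B) (e y z : nat))%N); last by move=> y _; rewrite card_sel.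
rewrite [RHS](eq_bigr (fun z => \sum_(y in A) (e z y : nat))%N); last by move=> z _; rewrite card_sel.
rewrite exchange_big /=; apply: eq_bigr => z _; apply: eq_bigr => y _.
by rewrite se.
Qed.

Lemma natle (R : realType) (m n : nat) : (m <= n)%N -> (m%:R : R) <= n%:R.
Proof. by rewrite ler_nat. Qed.

Section Main.
Variables (R : realType) (T : finType) (e : rel T) (d : nat) (D : R).
Hypothesis se : symmetric e.
Hypothesis ie : irreflexive e.
Hypothesis reg : regular e d.

Lemma diff_small (H H0 : {set T}) x :
  dense_spot e d D H -> dense_spot e d D H0 -> x \in H -> x \in H0 ->
  (#|H :\: H0|)%:R <= 8 * D * d%:R.
Proof.
move=> [hH dH] [hH0 dH0] xH xH0.
set N1 := [set z in H | e x z]; set N2 := [set z in H0 | e x z].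
have h1 : (#|N1 :|: N2| <= d)%N.
  rewrite -(reg x); apply: subset_leq_card; apply/subsetP => z.
  by rewrite !inE => /orP[/andP[_ ->]|/andP[_ ->]].
have h2 := cardsUI N1 N2.
have h3 : (#|N1 :&: N2|.+1 <= #|H :&: H0|)%N.
  have <- : #|x |: (N1 :&: N2)| = #|N1 :&: N2|.+1.
    by rewrite cardsU1 !inE ie /= andbF.
  apply: subset_leq_card; apply/subsetP => z.
  rewrite !inE => /orP[/eqP->|]; first by rewrite xH xH0.
  by move=> /andP[/andP[-> _] /andP[-> _]].
have h4 := cardsID H0 H.
have e1 := dH x xH. have e2 := dH0 x xH0.
rewrite /degIn -/N1 -/N2 in e1 e2.
move: h1 h3 hH => /(natle R) h1 /(natle R) h3 /(natle R) hH.
move: h2 h4 => /(congr1 (fun n : nat => n%:R : R)) h2 /(congr1 (fun n : nat => n%:R : R)) h4.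
rewrite !natrD in h2 h4. rewrite -addn1 natrD in h3. rewrite -addn1 natrD in hH.
lra.
Qed.

Lemma nbr_H0 (H H0 : {set T}) y :
  dense_spot e d D H -> dense_spot e d D H0 -> H :&: H0 != set0 -> y \in H ->
  (1 - 12 * D) * d%:R <= (degIn e H0 y)%:R.
Proof.
move=> sH sH0 /set0Pn[x]; rewrite inE => /andP[xH xH0] yH.
have hd := diff_small _ _ _ sH sH0 xH xH0.
have e1 := sH.2 y yH.
have h : (degIn e H y <= degIn e H0 y + #|H :\: H0|)%N.
  apply: leq_trans (leq_card_setU _ _); apply: subset_leq_card; apply/subsetP => z.
  rewrite !inE => /andP[zH ->]; rewrite zH andbT /=; by case: (z \in H0).
move: h => /(natle R); rewrite natrD => h.
lra.
Qed.

Lemma out_H0 (A H0 : {set T}) z :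
  dense_spot e d D H0 -> [disjoint A & H0] -> z \in H0 ->
  (#|[set y in A | e z y]|)%:R <= 4 * D * d%:R.
Proof.
move=> sH0 dis zH0.
have e1 := sH0.2 z zH0.
set S := [set y | e z y].
have h := cardsID [set y in H0 | e z y] S.
have h1 : S :&: [set y in H0 | e z y] = [set y in H0 | e z y].
  by apply/setIidPr/subsetP => y; rewrite !inE => /andP[_ ->].
have h2 : (#|[set y in A | e z y]| <= #|S :\: [set y in H0 | e z y]|)%N.
  apply: subset_leq_card; apply/subsetP => y; rewrite !inE => /andP[yA ->].
  by rewrite (disjointFr dis yA).
rewrite h1 (reg z) in h.
move: h => /(congr1 (fun n : nat => n%:R : R)); rewrite natrD => h.
move: h2 => /(natle R) h2.
rewrite /degIn in e1. lra.
Qed.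

Lemma main_bound (F : {set {set T}}) H0 :
  (forall H, H \in F -> dense_spot e d D H) ->
  (forall H1 H2, H1 \in F -> H2 \in F -> H1 :&: H2 != set0) ->
  H0 \in F -> 0 <= D -> 16 * D < 1 -> (0 < d)%N ->
  (#|cover F|)%:R <= (1 - 8 * D) / (1 - 13 * D) * (d.+1)%:R.
Proof.
move=> sF pF H0F D0 D1 d0.
set A := cover F :\: H0.
have sH0 := sF H0 H0F.
have dis : [disjoint A & H0].
  rewrite -setI_eq0; apply/eqP/setP => y; rewrite !inE.
  by case: (y \in H0); rewrite ?andbF.
have dc := @dcount T e A H0 se.
have lo : \sum_(y in A) ((1 - 12 * D) * d%:R) <= ((\sum_(y in A) #|[set z in H0 | e y z]|)%N)%:R.
  rewrite natr_sum; apply: ler_sum => y; rewrite inE => /andP[_ /bigcupP[H HF yH]].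
  exact: (nbr_H0 _ _ _ (sF H HF) sH0 (pF H H0 HF H0F) yH).
have hi : ((\sum_(z in H0) #|[set y in A | e z y]|)%N)%:R <= \sum_(z in H0) (4 * D * d%:R).
  rewrite natr_sum; apply: ler_sum => z zH0; exact: (out_H0 _ _ _ sH0 dis zH0).
rewrite dc in lo.
have := le_trans lo hi.
rewrite !sumr_const -[_ *+ #|A|]mulr_natr -[_ *+ #|H0|]mulr_natr => key.
have hH0 : (#|H0|%:R : R) <= (d.+1)%:R by apply: natle; exact: sH0.1.
have hK := cardsID H0 (cover F).
have hI : (#|cover F :&: H0|%:R : R) <= #|H0|%:R.
  by apply: natle; apply: subset_leq_card; apply: subsetIr.
move: hK => /(congr1 (fun n : nat => n%:R : R)); rewrite natrD => hK.
rewrite -hK -/A.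
have dpos : (0 : R) < d%:R by rewrite ltr0n.
set k := (#|A|%:R : R) in key *.
have k0 : 0 <= k by rewrite /k ler0n.
have h4 : 0 <= 4 * D * d%:R by rewrite !mulr_ge0 // ler0n.
have key1 : (#|H0|%:R : R) * (4 * D * d%:R) <= (d.+1)%:R * (4 * D * d%:R).
  exact: ler_wpM2r.
have key2 : k * (1 - 12 * D) <= (d.+1)%:R * (4 * D).
  have : (k * (1 - 12 * D) - (d.+1)%:R * (4 * D)) * d%:R <= 0.
    have E1 : (k * (1 - 12 * D) - (d.+1)%:R * (4 * D)) * d%:R =
      (1 - 12 * D) * d%:R * k - (d.+1)%:R * (4 * D * d%:R) by ring.
    rewrite E1 subr_le0; apply: le_trans key _; by rewrite mulrC.
  by rewrite pmulr_lle0 // subr_le0.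
set N := ((d.+1)%:R : R) in key2 hH0 *.
set i := (#|cover F :&: H0|%:R : R) in hI *.
have p13 : 0 < 1 - 13 * D by lra.
rewrite mulrAC ler_pdivlMr //.
have a1 : i * (1 - 13 * D) <= N * (1 - 13 * D) by rewrite ler_pM2r //; lra.
have a2 : 0 <= k * D by rewrite mulr_ge0.
have a3 : 0 <= N * D by rewrite mulr_ge0 // ler0n.
have E2 : (i + k) * (1 - 13 * D) = i * (1 - 13 * D) + k * (1 - 12 * D) - k * D by ring.
have E3 : (1 - 8 * D) * N = N * (1 - 13 * D) + N * (4 * D) + N * D by ring.
rewrite E2 E3.
lra.
Qed.

End Main.

Theorem lemma6 (R : realType) (c : R) (T : finType) (e : rel T) (d : nat)
  (K : {set T}) :
  0 < c < 1 ->
  (0 < d)%N ->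
  (d ^ 2 < #|T|)%N ->
  delta c #|T| d < 16%:R^-1 ->
  simple_graph e ->
  regular e d ->
  pseudo_clique e d (delta c #|T| d) K ->
  (#|K|)%:R <= (1 - 8 * delta c #|T| d) / (1 - 13 * delta c #|T| d) * (d.+1)%:R.
Proof.
move=> _ d0 _ D16 [se ie] reg [F [[[sF pF] _] ->]].
set D := delta c #|T| d in D16 sF pF *.
have D0 : 0 <= D by rewrite /D /delta mulr_ge0 // powR_ge0.
have D1 : 16 * D < 1.
  have h : 16%:R * D < 16%:R * 16%:R^-1 by rewrite ltr_pM2l.
  by rewrite mulfV ?pnatr_eq0 in h.
case: (set_0Vmem F) => [F0 | [H0 H0F]].
  rewrite F0 /cover big_set0 cards0 mulr_ge0 // ?divr_ge0 //; lra.
exact: (@main_bound R T e d D se ie reg F H0 sF pF H0F D0 D1 d0).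
Qed.
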